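(* Let $\Lambda=\{\lambda_1,\lambda_2,\lambda_3,\lambda_4\}$ be a multiset of non-zero real numbers such that $1\in\Lambda$, $|\lambda_j|\le1$ for all $j$, and $\sum_{j=1}^4\lambda_j\ge0$. Then there exists a completely positive trace-preserving linear map $T:\mathcal{M}_4(\mathbb{C})\to\mathcal{M}_4(\mathbb{C})$ with $\mathrm{spec}(T)\setminus\{0\}=\Lambda$.
   Context: $\mathrm{spec}(T)$ is the spectrum of $T$ as an operator on $\mathcal{M}_4(\mathbb{C})$ counted with algebraic multiplicity; $\mathrm{spec}(T)\setminus\{0\}$ removes all zeros. Completely positive: $T\otimes\mathrm{id}$ maps positive semidefinite matrices to positive semidefinite ones; trace-preserving: $\mathrm{tr}[T(X)]=\mathrm{tr}[X]$. *)

(* Defs.v *)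
From HB Require Import structures.
From mathcomp Require Import all_boot all_order all_algebra.
Set Implicit Arguments. Unset Strict Implicit. Unset Printing Implicit Defensive.
Import Order.TTheory GRing.Theory Num.Theory.
Local Open Scope ring_scope.

Section Defs.
Variable C : numClosedFieldType.

(* Positive semidefinite matrix indexed by a finite type I:
   v^* A v >= 0 for every vector v (over C this also forces hermiticity). *)
Definition psd (I : finType) (A : I -> I -> C) : Prop :=
  forall v : I -> C, 0 <= \sum_(i : I) \sum_(j : I) (v i)^* * A i j * v j.

(* T (x) id_k acting on M_4(C) (x) M_k(C) = M_k(M_4(C)): an element is given by
   its k x k blocks X p q : 'M_4; its entry at row (a,p), column (b,q) is X p q a b. *)
Definition completely_positive (T : 'M[C]_4 -> 'M[C]_4) : Prop :=
  forall (k : nat) (X : 'I_k -> 'I_k -> 'M[C]_4),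
    psd (fun (r s : 'I_4 * 'I_k) => X r.2 s.2 r.1 s.1) ->
    psd (fun (r s : 'I_4 * 'I_k) => T (X r.2 s.2) r.1 s.1).

Definition trace_preserving (T : 'M[C]_4 -> 'M[C]_4) : Prop :=
  forall X : 'M[C]_4, \tr (T X) = \tr X.

(* Algebraic multiplicity of x in spec(T), T viewed as an operator on the
   16-dimensional space M_4(C): multiplicity of x as root of the
   characteristic polynomial of the matrix of T. *)
Definition spec_mult (T : 'M[C]_4 -> 'M[C]_4) (x : C) : nat :=
  mup x (char_poly (lin_mx T)).

End Defs.

(* Main.v *)
From Stdlib Require Import Ring Field Lia.
Require Import Defs.
From HB Require Import structures.
From mathcomp Require Import all_boot all_order all_algebra.
Import Order.TTheory GRing.Theory Num.Theory.
Local Open Scope ring_scope.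

Lemma char_poly_sylv (R : comNzRingType) m n (U : 'M[R]_(m, n)) (V : 'M[R]_(n, m)) :
  'X^n * char_poly (U *m V) = 'X^m * char_poly (V *m U).
Proof.
set Up := map_mx polyC U; set Vp := map_mx polyC V.
pose Mb := block_mx ('X%:M : 'M[{poly R}]_m) Up Vp 1%:M.
have E1 : Mb *m block_mx 1%:M 0 (- Vp) 1%:M = block_mx (char_poly_mx (U *m V)) Up 0 1%:M.
  rewrite mulmx_block !mulmx0 !mulmx1 ?addr0 ?add0r mulmxN mul1mx subrr.
  by rewrite /char_poly_mx map_mxM.
have E2 : block_mx 1%:M 0 (- Vp) ('X%:M) *m Mb = block_mx ('X%:M) Up 0 (char_poly_mx (V *m U)).
  rewrite mulmx_block !mul1mx !mul0mx !addr0 mulNmx mulNmx.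
  rewrite /char_poly_mx map_mxM mulmx1 scalar_mxC addNr addrC.
  done.
have := congr1 determinant E1; rewrite det_mulmx det_ublock det_lblock !det1 !mulr1 => D1.
have := congr1 determinant E2; rewrite det_mulmx det_ublock det_lblock !det1 !det_scalar mul1r => D2.
by rewrite /char_poly -D1 D2.
Qed.

Section Chan.
Variable C : numClosedFieldType.

Definition dvecv (u : 'rV[C]_(4*4)) : 'rV[C]_4 := \row_j (vec_mx u) j j.
Lemma dvecv_lin : linear dvecv.
Proof. move=> k u w; apply/rowP=> j; by rewrite !mxE. Qed.
HB.instance Definition _ := GRing.isLinear.Build C _ _ _ dvecv dvecv_lin.

Definition ediag (v : 'rV[C]_4) : 'rV[C]_(4*4) := mxvec (diag_mx v).
Lemma ediag_lin : linear ediag.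
Proof.
move=> k u w; rewrite /ediag -linearP; congr mxvec.
by apply/matrixP=> i j; rewrite !mxE mulrnDl mulrnAr.
Qed.
HB.instance Definition _ := GRing.isLinear.Build C _ _ _ ediag ediag_lin.

Variable P : 'M[C]_4.
Definition Tch (X : 'M[C]_4) : 'M[C]_4 := diag_mx (\row_j X j j *m P).
Lemma Tch_lin : linear Tch.
Proof.
move=> k X Y; rewrite /Tch.
have -> : \row_j (k *: X + Y) j j = k *: \row_j X j j + \row_j Y j j.
  by apply/rowP=> j; rewrite !mxE.
rewrite mulmxDl -scalemxAl.
by apply/matrixP=> i j; rewrite !mxE mulrnDl mulrnAr.
Qed.
HB.instance Definition _ := GRing.isLinear.Build C _ _ _ Tch Tch_lin.

Lemma lin_mx_Tch : lin_mx Tch = lin1_mx dvecv *m (P *m lin1_mx ediag).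
Proof.
apply/row_matrixP => k; rewrite !rowE mul_rV_lin !mulmxA.
rewrite (mul_rV_lin1 dvecv) (mul_rV_lin1 ediag) /=.
by rewrite /ediag /Tch /dvecv.

Qed.

Lemma ediag_dvec : lin1_mx ediag *m lin1_mx dvecv = 1%:M.
Proof.
apply/row_matrixP => j; rewrite !rowE mulmxA (mul_rV_lin1 ediag) (mul_rV_lin1 dvecv) /= mulmx1.
apply/rowP=> l; rewrite /dvecv /ediag mxvecK !mxE !eqxx.
by rewrite mulr1n.
Qed.

Lemma cp_Tch : char_poly (lin_mx Tch) = 'X^12 * char_poly P.
Proof.
have := @char_poly_sylv _ _ _ (lin1_mx dvecv) (P *m lin1_mx ediag).
rewrite -lin_mx_Tch -mulmxA ediag_dvec mulmx1.
have -> : ('X^(4*4) : {poly C}) = 'X^4 * 'X^12 by rewrite -exprD.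
move=> H; apply: (@mulfI _ ('X^4 : {poly C})); first by rewrite expf_neq0 // polyX_eq0.
by rewrite mulrA -H.
Qed.

Lemma spec_Tch x : x != 0 -> spec_mult Tch x = mup x (char_poly P).
Proof.
move=> nx; rewrite /spec_mult cp_Tch mupMr //.
by rewrite /root hornerXn expf_neq0.
Qed.

End Chan.

Section CP.
Variable C : numClosedFieldType.

Lemma sum_pair k (F : 'I_4 * 'I_k -> C) : \sum_r F r = \sum_i \sum_j F (i, j).
Proof. by rewrite pair_big /=; apply: eq_bigr => [[i j]]. Qed.

Lemma sum_sel k (G : 'I_4 * 'I_k -> C) c :
  \sum_s (if s.1 == c then G s else 0) = \sum_q G (c, q).
Proof.
rewrite sum_pair (bigD1 c) //= [X in _ + X]big1 ?addr0 => [|i ic]; last first.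
  by apply: big1 => j _; rewrite (negbTE ic).
by apply: eq_bigr => q _; rewrite eqxx.
Qed.

Lemma psd_restr k (A : 'I_4 * 'I_k -> 'I_4 * 'I_k -> C) c (u : 'I_k -> C) :
  psd A -> 0 <= \sum_p \sum_q (u p)^* * A (c, p) (c, q) * u q.
Proof.
move=> H; have := H (fun r => if r.1 == c then u r.2 else 0).
set S := (X in 0 <= X -> _).
suff -> : S = \sum_p \sum_q (u p)^* * A (c, p) (c, q) * u q by [].
rewrite /S.
transitivity (\sum_r (if r.1 == c then
   \sum_s (if s.1 == c then (u r.2)^* * A r s * u s.2 else 0) else 0)).
  apply: eq_bigr => r _; case: eqP => _; last first.
    by apply: big1 => s _; rewrite conjC0 !mul0r.
  by apply: eq_bigr => s _; case: eqP => _; rewrite ?mulr0.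
rewrite sum_sel; apply: eq_bigr => p _; rewrite sum_sel //.
Qed.

Variable P : 'M[C]_4.
Hypothesis Pge : forall i j, 0 <= P i j.
Hypothesis Psum : forall i, \sum_j P i j = 1.

Lemma Tch_tp : trace_preserving (@Tch C P).
Proof.
move=> X; rewrite /Tch mxtrace_diag.
under eq_bigr => j _ do rewrite !mxE.
rewrite exchange_big /mxtrace; apply: eq_bigr => c _.
by rewrite -mulr_sumr Psum mulr1 mxE.
Qed.

Lemma Tch_cp : completely_positive (@Tch C P).
Proof.
move=> k X HX v; rewrite /Tch.
set S := (X in 0 <= X).
have -> : S = \sum_a \sum_c P c a *
    \sum_p \sum_q (v (a, p))^* * X p q c c * v (a, q).
  rewrite /S.
  transitivity (\sum_r \sum_s (if s.1 == r.1 then (v r)^* *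
      (\sum_c X r.2 s.2 c c * P c r.1) * v s else 0)).
    apply: eq_bigr => r _; apply: eq_bigr => s _; rewrite !mxE eq_sym.
    case: eqP => _; last by rewrite mulr0n mulr0 mul0r.
    by rewrite mulr1n; congr (_ * _ * _); apply: eq_bigr => c _; rewrite mxE.
  under eq_bigr => r _ do rewrite sum_sel.
  rewrite sum_pair; apply: eq_bigr => a _.
  symmetry; under eq_bigr => c _ do rewrite mulr_sumr.
  rewrite exchange_big /=; apply: eq_bigr => p _.
  under eq_bigr => c _ do rewrite mulr_sumr.
  rewrite exchange_big /=; apply: eq_bigr => q _.
  rewrite mulr_sumr mulr_suml; apply: eq_bigr => c _.
  by rewrite mulrCA !mulrA [_ * P c a]mulrC.
apply: sumr_ge0 => a _; apply: sumr_ge0 => c _; apply: mulr_ge0 => //.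
exact: (@psd_restr k (fun r s => X r.2 s.2 r.1 s.1) c (fun p => v (a, p)) HX).
Qed.

End CP.

Section Real.
Variable C : numClosedFieldType.
Notation CC := (GRing.PzSemiRing.sort C).
Definition addC (x y : CC) : CC := x + y.
Definition mulC (x y : CC) : CC := x * y.
Definition oppC (x : CC) : CC := - x.
Definition invC (x : CC) : CC := x^-1.
Definition zC : CC := 0.
Definition oC : CC := 1.
Lemma Cring : @ring_theory CC zC oC addC mulC (fun x y => addC x (oppC y)) oppC eq.
Proof. rewrite /addC /mulC /oppC /zC /oC; split=> //=. exact: add0r. exact: addrC. exact: addrA. exact: mul1r. exact: mulrC. exact: mulrA. exact: mulrDl. exact: subrr. Qed.
Lemma Cfield : @field_theory CC zC oC addC mulC (fun x y => addC x (oppC y)) oppC (fun x y => mulC x (invC y)) invC eq.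
Proof. split=> //. exact Cring. rewrite /oC /zC; apply/eqP; exact: oner_neq0. move=> p Hp; rewrite /mulC /invC /oC mulrC mulfV //; exact/eqP. Qed.
Add Field Cf : Cfield.
Lemma addE (x y : C) : x + y = addC x y. Proof. by []. Qed.
Lemma mulE (x y : C) : x * y = mulC x y. Proof. by []. Qed.
Lemma oppE (x : C) : - x = oppC x. Proof. by []. Qed.
Lemma invE (x : C) : x^-1 = invC x. Proof. by []. Qed.
Lemma zE : 0 = zC :> C. Proof. by []. Qed.
Lemma oE : 1 = oC :> C. Proof. by []. Qed.
Ltac normeq := match goal with |- @eq _ ?x ?y => change (@eq CC x y) end.
Ltac toC := normeq; rewrite ?addE ?mulE ?oppE ?invE ?zE ?oE.

Definition mx4 (l : seq (seq C)) : 'M[C]_4 := \matrix_(i, j) nth 0 (nth [::] l i) j.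

Definition h : C := (1 + 1)^-1.
Definition q : C := ((1 + 1) * (1 + 1))^-1.
Lemma two_neq0 : (1 + 1 : C) != 0.
Proof. by rewrite lt0r_neq0 // addr_gt0 ?ltr01. Qed.
Lemma h_gt0 : 0 <= h. Proof. by rewrite invr_ge0 addr_ge0 ?ler01. Qed.
Lemma q_gt0 : 0 <= q. Proof. by rewrite invr_ge0 mulr_ge0 // addr_ge0 ?ler01. Qed.

Ltac fld := toC; field; rewrite /addC /mulC /oC /zC /oppC /invC; try (apply/eqP; rewrite ?mulf_neq0 ?two_neq0 //).

Lemma sylv_sq (A B : 'M[C]_4) : char_poly (A *m B) = char_poly (B *m A).
Proof.
have := @char_poly_sylv _ _ _ A B; apply: mulfI.
by rewrite expf_neq0 // polyX_eq0.
Qed.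

Ltac expand := rewrite ?mxE ?big_ord_recr ?big_ord0 /=; rewrite ?mxE ?big_ord_recr ?big_ord0 /=;
  rewrite ?mxE /= ?mulr1n ?mulr0n.
Ltac cases4 i := case: i => [[|[|[|[|?]]]] ?] //=.

Section Klein.
Variables a b c : C.
Definition WK := mx4 [:: [:: 1; 1; 1; 1]; [:: 1; -1; 1; -1]; [:: 1; 1; -1; -1]; [:: 1; -1; -1; 1]].
Definition WKi := mx4 [:: [:: q; q; q; q]; [:: q; -q; q; -q]; [:: q; q; -q; -q]; [:: q; -q; -q; q]].
Definition MK := mx4 [:: [:: 1; 0; 0; 0]; [:: 0; a; 0; 0]; [:: 0; 0; b; 0]; [:: 0; 0; 0; c]].
Definition al0 := q * (1 + a + b + c).
Definition al1 := q * (1 - a + b - c).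
Definition al2 := q * (1 + a - b - c).
Definition al3 := q * (1 - a - b + c).
Definition PK := mx4 [:: [:: al0; al1; al2; al3]; [:: al1; al0; al3; al2];
                        [:: al2; al3; al0; al1]; [:: al3; al2; al1; al0]].
Lemma WK_inv : WK *m WKi = 1%:M.
Proof.
apply/matrixP => i j; cases4 i; cases4 j; expand; rewrite /q; fld.
Qed.
Lemma PK_eq : WKi *m (MK *m WK) = PK.
Proof.
apply/matrixP => i j; cases4 i; cases4 j; expand; rewrite /al0 /al1 /al2 /al3 /q; fld.
Qed.

Lemma MK_trig : is_trig_mx MK.
Proof.
apply/is_trig_mxP => i j; cases4 i; cases4 j; by rewrite mxE.

Qed.

Lemma cp_PK : char_poly PK = \prod_(x <- [:: 1; a; b; c]) ('X - x%:P).
Proof.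
rewrite -PK_eq sylv_sq -mulmxA WK_inv mulmx1 char_poly_trig ?MK_trig //.
rewrite !big_ord_recr big_ord0 !big_cons big_nil /= !mxE /=.
by rewrite mul1r mulr1 !mulrA.
Qed.

Lemma PK_sum i : \sum_j PK i j = 1.
Proof. cases4 i; expand; rewrite /al0 /al1 /al2 /al3 /q; fld. Qed.

Lemma PK_ge : 0 <= al0 -> 0 <= al1 -> 0 <= al2 -> 0 <= al3 -> forall i j, 0 <= PK i j.
Proof. by move=> ? ? ? ? i j; cases4 i; cases4 j; rewrite mxE. Qed.
End Klein.

Section Block.
Variables a b c : C.
Definition WB := mx4 [:: [:: 1; 1; 0; 0]; [:: 1; -1; 0; 0]; [:: 0; 0; 1; 1]; [:: 0; 0; 1; -1]].
Definition WBi := mx4 [:: [:: h; h; 0; 0]; [:: h; -h; 0; 0]; [:: 0; 0; h; h]; [:: 0; 0; h; -h]].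
Definition MB := mx4 [:: [:: 1; 0; 0; 0]; [:: 0; a; 0; 0]; [:: 1 - b; 0; b; 0]; [:: 0; 0; 0; c]].
Definition PB := mx4 [:: [:: h * (1 + a); h * (1 - a); 0; 0]; [:: h * (1 - a); h * (1 + a); 0; 0];
   [:: h * (1 - b); h * (1 - b); h * (b + c); h * (b - c)];
   [:: h * (1 - b); h * (1 - b); h * (b - c); h * (b + c)]].
Lemma WB_inv : WB *m WBi = 1%:M.
Proof.
apply/matrixP => i j; cases4 i; cases4 j; expand; rewrite /h; fld.
Qed.
Lemma PB_eq : WBi *m (MB *m WB) = PB.
Proof.
apply/matrixP => i j; cases4 i; cases4 j; expand; rewrite /h; fld.
Qed.
Lemma MB_trig : is_trig_mx MB.
Proof.
apply/is_trig_mxP => i j; cases4 i; cases4 j; by rewrite mxE.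
Qed.
Lemma cp_PB : char_poly PB = \prod_(x <- [:: 1; a; b; c]) ('X - x%:P).
Proof.
rewrite -PB_eq sylv_sq -mulmxA WB_inv mulmx1 char_poly_trig ?MB_trig //.
rewrite !big_ord_recr big_ord0 !big_cons big_nil /= !mxE /=.
by rewrite mul1r mulr1 !mulrA.
Qed.
Lemma PB_sum i : \sum_j PB i j = 1.
Proof. cases4 i; expand; rewrite /h; fld. Qed.
Lemma PB_ge : 0 <= 1 + a -> 0 <= 1 - a -> 0 <= 1 - b -> 0 <= b + c -> 0 <= b - c ->
  forall i j, 0 <= PB i j.
Proof.
move=> ? ? ? ? ? i j; cases4 i; cases4 j; rewrite mxE /= ?mulr_ge0 ?h_gt0 //.
Qed.
End Block.

Lemma rtot (x y : C) : x \is Num.real -> y \is Num.real -> x <= y \/ y < x.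
Proof. by move=> rx ry; case: (real_leP rx ry); [left|right]. Qed.

Lemma abs_bounds (x : C) : x \is Num.real -> `|x| <= 1 -> 0 <= 1 + x /\ 0 <= 1 - x.
Proof.
move=> rx hx; split.
  have : - x <= 1 by apply: le_trans hx; rewrite -normrN real_ler_norm // rpredN.
  by rewrite -subr_ge0 opprK.
have : x <= 1 by apply: le_trans hx; rewrite real_ler_norm.
by rewrite -subr_ge0.
Qed.

Definition goodP (P : 'M[C]_4) (l : seq C) :=
  (forall i j, 0 <= P i j) /\ (forall i, \sum_j P i j = 1) /\
  (forall x, mup x (char_poly P) = count_mem x l).

Lemma goodP_perm P l1 l2 : perm_eq l1 l2 -> goodP P l1 -> goodP P l2.
Proof.
move=> pl [h1 [h2 h3]]; split=> //; split=> // x.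
by rewrite h3; apply: (permP pl).
Qed.

Lemma block_case (x y z : C) : x \is Num.real -> y \is Num.real ->
  `|x| <= 1 -> `|y| <= 1 -> 0 <= y + z -> z <= y -> exists P, goodP P [:: 1; x; y; z].
Proof.
move=> rx ry hx hy hyz zy.
have [hx1 hx2] := abs_bounds _ rx hx; have [hy1 hy2] := abs_bounds _ ry hy.
exists (PB x y z); split; first by apply: PB_ge => //; rewrite subr_ge0.
split; first exact: PB_sum.
by move=> w; rewrite cp_PB mu_prod_XsubC.
Qed.

Lemma klein_case (x y z : C) : x \is Num.real -> y \is Num.real -> z \is Num.real ->
  `|x| <= 1 -> `|y| <= 1 -> `|z| <= 1 -> 0 <= 1 + x + y + z ->
  x + y < 0 -> x + z < 0 -> y + z < 0 -> exists P, goodP P [:: 1; x; y; z].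
Proof.
move=> rx ry rz hx hy hz hs hxy hxz hyz.
have [hx1 _] := abs_bounds _ rx hx; have [hy1 _] := abs_bounds _ ry hy.
have [hz1 _] := abs_bounds _ rz hz.
have key : forall u v w : C, 0 <= 1 + u -> v + w < 0 -> 0 <= (1 + u) - (v + w).
  move=> u v w h1 h2; rewrite subr_ge0; apply: le_trans h1; exact: ltW.
exists (PK x y z); split.
  apply: PK_ge; apply: mulr_ge0; rewrite ?q_gt0 //.
  - have -> : 1 - x + y - z = (1 + y) - (x + z) by toC; ring.
    exact: key.
  - have -> : 1 + x - y - z = (1 + x) - (y + z) by toC; ring.
    exact: key.
  - have -> : 1 - x - y + z = (1 + z) - (x + y) by toC; ring.
    exact: key.
split; first exact: PK_sum.
by move=> w; rewrite cp_PK mu_prod_XsubC.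
Qed.

Lemma perm1 (T : eqType) (u a b c : T) : perm_eq [:: u; a; c; b] [:: u; a; b; c].
Proof. apply/permP => p /=. rewrite !addn0 -!plusE. lia. Qed.
Lemma perm2 (T : eqType) (u a b c : T) : perm_eq [:: u; b; a; c] [:: u; a; b; c].
Proof. apply/permP => p /=. rewrite !addn0 -!plusE. lia. Qed.
Lemma perm3 (T : eqType) (u a b c : T) : perm_eq [:: u; b; c; a] [:: u; a; b; c].
Proof. apply/permP => p /=. rewrite !addn0 -!plusE. lia. Qed.
Lemma perm4 (T : eqType) (u a b c : T) : perm_eq [:: u; c; a; b] [:: u; a; b; c].
Proof. apply/permP => p /=. rewrite !addn0 -!plusE. lia. Qed.
Lemma perm5 (T : eqType) (u a b c : T) : perm_eq [:: u; c; b; a] [:: u; a; b; c].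
Proof. apply/permP => p /=. rewrite !addn0 -!plusE. lia. Qed.

Lemma realize (a b c : C) : a \is Num.real -> b \is Num.real -> c \is Num.real ->
  `|a| <= 1 -> `|b| <= 1 -> `|c| <= 1 -> 0 <= 1 + a + b + c ->
  exists P, goodP P [:: 1; a; b; c].
Proof.
move=> ra rb rc ha hb hc hs.
have r0 : (0 : C) \is Num.real by [].
have [hbc|hbc] := rtot _ _ r0 (rpredD rb rc).
  have [cb|bc] := rtot _ _ rc rb; first exact: block_case.
  have [P hP] := @block_case a c b ra rc ha hc (ltac:(by rewrite addrC)) (ltW bc).
  by exists P; apply: goodP_perm hP; apply: perm1.
have [hac|hac] := rtot _ _ r0 (rpredD ra rc).
  have [ca|ac] := rtot _ _ rc ra.
    have [P hP] := @block_case b a c rb ra hb ha hac ca.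
    by exists P; apply: goodP_perm hP; apply: perm2.
  have [P hP] := @block_case b c a rb rc hb hc (ltac:(by rewrite addrC)) (ltW ac).
  by exists P; apply: goodP_perm hP; apply: perm3.
have [hab|hab] := rtot _ _ r0 (rpredD ra rb).
  have [ba|ab] := rtot _ _ rb ra.
    have [P hP] := @block_case c a b rc ra hc ha hab ba.
    by exists P; apply: goodP_perm hP; apply: perm4.
  have [P hP] := @block_case c b a rc rb hc hb (ltac:(by rewrite addrC)) (ltW ab).
  by exists P; apply: goodP_perm hP; apply: perm5.
exact: klein_case.
Qed.

End Real.

Theorem theorem6 (C : numClosedFieldType) (Lambda : 4.-tuple C) :
  (forall l, l \in Lambda -> l \is Num.real) ->
  (forall l, l \in Lambda -> l != 0) ->
  1 \in Lambda ->
  (forall l, l \in Lambda -> `|l| <= 1) ->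
  0 <= \sum_(l <- Lambda) l ->
  exists T : {linear 'M[C]_4 -> 'M[C]_4},
    completely_positive T /\ trace_preserving T /\
    (forall x : C, x != 0 -> spec_mult T x = count_mem x Lambda).
Proof.
move=> Hreal Hnz H1 Habs Hsum.
have pl := perm_to_rem H1.
have sz : size (rem 1 Lambda) = 3%N by rewrite size_rem // size_tuple.
move: pl; case E: (rem 1 Lambda) sz => [|a [|b [|c [|d s]]]] // _ pl.
have mem : forall l, l \in [:: a; b; c] -> l \in Lambda.
  by move=> l hl; rewrite (perm_mem pl) inE hl orbT.
have ra := Hreal a (mem a ltac:(by rewrite inE eqxx)).
have rb := Hreal b (mem b ltac:(by rewrite !inE eqxx orbT)).
have rc := Hreal c (mem c ltac:(by rewrite !inE eqxx !orbT)).
have ha := Habs a (mem a ltac:(by rewrite inE eqxx)).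
have hb := Habs b (mem b ltac:(by rewrite !inE eqxx orbT)).
have hc := Habs c (mem c ltac:(by rewrite !inE eqxx !orbT)).
have hs : 0 <= 1 + a + b + c.
  by move: Hsum; rewrite (perm_big _ pl) !big_cons big_nil /= addr0 !addrA.
have [P [Pge [Psum Pmup]]] := @realize C a b c ra rb rc ha hb hc hs.
exists (GRing.Linear.clone _ _ _ _ (@Tch C P) _); split; first exact: Tch_cp.
split; first exact: Tch_tp.
move=> x nx; rewrite (@spec_Tch C P x nx) Pmup.
by rewrite (permP pl).
Qed.
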